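(* Let $k$ be any field and $d$ a positive integer. Then $d\,S_{d+1}(x_1,\ldots,x_{d+1})\in R_1^{(d)}$.
   Context: $X=\{x_1,x_2,\ldots\}$ is a countably infinite set and $k_0\langle X\rangle$ is the free associative $k$-algebra (without identity) on $X$. A $T$-space is a $k$-linear subspace closed under every algebra endomorphism of $k_0\langle X\rangle$; the $T$-space generated by a subset is the smallest $T$-space containing it. $S_d(v_1,\ldots,v_d)=\sum_{\sigma\in\Sigma_d}\prod_{i=1}^d v_{\sigma(i)}$, and $R_1^{(d)}$ is the $T$-space generated by $S_d(x_1,\ldots,x_d)$. *)

(* Defs.v *)
From HB Require Import structures.
From mathcomp Require Import all_boot all_order all_algebra all_fingroup.
From mathcomp.multinomials Require Import monalg.
Set Implicit Arguments. Unset Strict Implicit. Unset Printing Implicit Defensive.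
Import GRing.Theory.
Local Open Scope ring_scope.

(* The free unital associative k-algebra k<X> on X = {x_0, x_1, ...}:
   the monoid algebra of the free monoid on nat. *)
Definition FA (k : fieldType) := {malg k[{fmonom nat}]}.

(* The variable x_i (the paper's x_{i+1}). *)
Definition X (k : fieldType) (i : nat) : FA k := << fmu i >>.

(* Membership in k_0<X>: zero coefficient on the empty word. *)
Definition in_k0X (k : fieldType) (p : FA k) : Prop := p@_(fmone nat) = 0.

Definition is_subspace (k : fieldType) (V : FA k -> Prop) : Prop :=
  [/\ forall p, V p -> in_k0X p,
      V 0,
      forall p q, V p -> V q -> V (p + q)
    & forall (a : k) p, V p -> V (a *: p)].

(* phi is a (non-unital) k-algebra endomorphism of k_0<X>
   (only its values on k_0<X> matter). *)
Definition is_alg_endo (k : fieldType) (phi : FA k -> FA k) : Prop :=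
  [/\ forall p, in_k0X p -> in_k0X (phi p),
      forall p q, in_k0X p -> in_k0X q -> phi (p + q) = phi p + phi q,
      forall (a : k) p, in_k0X p -> phi (a *: p) = a *: phi p
    & forall p q, in_k0X p -> in_k0X q -> phi (p * q) = phi p * phi q].

Definition is_Tspace (k : fieldType) (V : FA k -> Prop) : Prop :=
  is_subspace V /\
  forall phi, is_alg_endo phi -> forall p, V p -> V (phi p).

Definition in_Tspace_gen (k : fieldType) (S : FA k -> Prop) (p : FA k) : Prop :=
  forall V : FA k -> Prop, is_Tspace V -> (forall q, S q -> V q) -> V p.

Definition Ssym (k : fieldType) (d : nat) (v : 'I_d -> FA k) : FA k :=
  \sum_(s : 'S_d) \prod_(i < d) v (s i).

Definition Sx (k : fieldType) (d : nat) : FA k := Ssym (fun i : 'I_d => X k i).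

(* Main.v *)
Require Import Defs.
From HB Require Import structures.
From mathcomp Require Import all_boot all_order all_algebra all_fingroup.
From mathcomp.multinomials Require Import monalg.
Import GRing.Theory.
Local Open Scope ring_scope.
Set Implicit Arguments. Unset Strict Implicit.
Section Lists.
Variable R : ringType.

Fixpoint picks (l : seq R) : seq (R * seq R) :=
  if l is a :: l' then (a, l') :: [seq (p.1, a :: p.2) | p <- picks l'] else [::].

Lemma sum_picks_cons a r (F : R * seq R -> R) :
  \sum_(q <- picks (a :: r)) F q = F (a, r) + \sum_(q <- picks r) F (q.1, a :: q.2).
Proof. by rewrite /= big_cons big_map. Qed.

Lemma picks_swap l (G : R -> R -> seq R -> R) :
  \sum_(p <- picks l) \sum_(q <- picks p.2) G p.1 q.1 q.2 =
  \sum_(p <- picks l) \sum_(q <- picks p.2) G q.1 p.1 q.2.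
Proof.
elim: l G => [|a l IH] G; first by rewrite !big_nil.
rewrite !sum_picks_cons /=.
have E1 : forall H : R -> R -> seq R -> R, \sum_(q <- picks l) \sum_(z <- picks (a :: q.2)) H q.1 z.1 z.2
   = \sum_(q <- picks l) (H q.1 a q.2 + \sum_(z <- picks q.2) H q.1 z.1 (a :: z.2)).
  by move=> H; apply: eq_bigr => q _; rewrite sum_picks_cons.
rewrite (E1 G) (E1 (fun x y r => G y x r)) /=.
rewrite !big_split /= (IH (fun x y r => G x y (a :: r))).
by rewrite addrA [X in X + _]addrC -addrA.
Qed.

Fixpoint Sn (n : nat) (l : seq R) : R :=
  if n is n'.+1 then \sum_(p <- picks l) p.1 * Sn n' p.2 else 1.

Definition Sl l := Sn (size l) l.

Lemma size_picks l p : p \in picks l -> size p.2 = (size l).-1.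
Proof.
elim: l p => [|a l IH] p //=; rewrite in_cons => /orP [/eqP -> //|].
case/mapP => q qin -> /=; rewrite (IH _ qin).
by case: l IH qin => //.
Qed.

Lemma SnS n l : Sn n.+1 l = \sum_(p <- picks l) p.1 * Sn n p.2.
Proof. by []. Qed.

Lemma picks_all (P : pred R) l p : all P l -> p \in picks l -> P p.1 && all P p.2.
Proof.
elim: l p => [|a l IH] p //= /andP [Pa Pl]; rewrite in_cons => /orP [/eqP -> //=|].
  by rewrite Pa Pl.
by case/mapP => q qin -> /=; case/andP: (IH q Pl qin) => -> ->; rewrite Pa.
Qed.

Lemma Sl_nil : Sl [::] = 1. Proof. by []. Qed.

Lemma SlE l : l != [::] -> Sl l = \sum_(p <- picks l) p.1 * Sl p.2.
Proof.
case: l => // a l _; rewrite /Sl [size _]/= SnS.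
rewrite big_seq [RHS]big_seq; apply: eq_bigr => p pin.
by rewrite /Sl (size_picks pin).
Qed.

Lemma SlE_cons a l : Sl (a :: l) = a * Sl l + \sum_(p <- picks l) p.1 * Sl (a :: p.2).
Proof. by rewrite SlE // big_cons big_map. Qed.

Definition Pl l := \sum_(p <- picks l) \sum_(q <- picks p.2) Sl ((p.1 * q.1) :: q.2).

Lemma Pl_eq l : Pl l = Sl l *+ (size l).-1.
Proof.
move: {2}(size l) (erefl (size l)) => n; elim: n l => [|n IH] l.
  by move/size0nil => ->; rewrite /Pl big_nil.
case: n IH => [|n] IH.
  by case: l => [|a [|]] // _; rewrite /Pl big_cons big_nil /= big_nil addr0 mulr0n.
move=> hl.
rewrite /Pl.
under eq_bigr => p _ do under eq_bigr => q _ do rewrite SlE_cons.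
under eq_bigr => p _ do rewrite big_split /=.
rewrite big_split /=.
have -> : \sum_(p <- picks l) \sum_(q <- picks p.2) p.1 * q.1 * Sl q.2 = Sl l.
  rewrite (SlE (l := l)); last by case: l hl.
  rewrite big_seq [RHS]big_seq; apply: eq_bigr => p pin.
  rewrite (SlE (l := p.2)); last by case: (p.2) (size_picks pin) => //; rewrite hl.
  by rewrite mulr_sumr; apply: eq_bigr => q _; rewrite mulrA.
under eq_bigr => p _ do rewrite (picks_swap p.2 (fun y z r => z * Sl ((p.1 * y) :: r))).
rewrite (picks_swap l (fun x y r => \sum_(z <- picks r) y * Sl ((x * z.1) :: z.2))) /=.
have -> : \sum_(p <- picks l) \sum_(q <- picks p.2)
      \sum_(z <- picks q.2) p.1 * Sl ((q.1 * z.1) :: z.2) = Sl l *+ n.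
  rewrite (SlE (l := l)); last by case: l hl.
  rewrite -sumrMnl big_seq [RHS]big_seq; apply: eq_bigr => p pin.
  have hp := size_picks pin; rewrite hl /= in hp. rewrite -mulrnAr -[X in _ *+ X]/((n.+1).-1) -hp -(IH p.2 hp).
  by rewrite /Pl mulr_sumr; apply: eq_bigr => q _; rewrite mulr_sumr.
by rewrite -mulrS hl.
Qed.

End Lists.
Section Perm.
Variable K : fieldType.

Lemma Ssym0 (v : 'I_0 -> FA K) : Ssym v = 1.
Proof.
rewrite /Ssym (eq_bigr (fun _ => 1)); last by move=> s _; rewrite big_ord0.
by rewrite sumr_const card_Sn.
Qed.

Lemma Ssym_rec n (v : 'I_n.+1 -> FA K) :
  Ssym v = \sum_(j < n.+1) v j * Ssym (fun i : 'I_n => v (lift j i)).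
Proof.
rewrite /Ssym (partition_big (fun s : 'S_n.+1 => s ord0) xpredT) //=.
apply: eq_bigr => j _.
rewrite mulr_sumr.
rewrite (reindex (lift_perm ord0 j)); last first.
  pose ulsf i (s : 'S_n.+1) k := odflt k (unlift (s i) (s (lift i k))).
  have ulsfK i (s : 'S_n.+1) k: lift (s i) (ulsf i s k) = s (lift i k).
    rewrite /ulsf; have:= neq_lift i k.
    by rewrite -(can_eq (permK s)) => /unlift_some[] ? ? ->.
  have inj_ulsf: injective (ulsf ord0 _).
    move=> s; apply: can_inj (ulsf (s ord0) s^-1%g) _ => k'.
    by rewrite {1}/ulsf ulsfK !permK liftK.
  exists (fun s => perm (inj_ulsf s)) => [s _ | s].
    by apply/permP=> k'; rewrite permE /ulsf lift_perm_lift lift_perm_id liftK.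
  move/(s _ =P _) => si0; apply/permP=> k.
  case: (unliftP ord0 k) => [k'|] ->; rewrite ?lift_perm_id //.
  by rewrite lift_perm_lift -si0 permE ulsfK.
apply: eq_big => [s | s _]; first by rewrite lift_perm_id eqxx.
rewrite big_ord_recl lift_perm_id; congr (_ * _).
by apply: eq_bigr => i _; rewrite lift_perm_lift.
Qed.

Lemma lift_lift0 m (j : 'I_m.+1) (k : 'I_m) :
  lift (lift ord0 j) (lift ord0 k) = lift ord0 (lift j k) :> 'I_m.+2.
by apply: val_inj; rewrite /= /bump /= !add1n ltnS addnS. Qed.

Lemma lift_lift0_0 m (j : 'I_m.+1) : lift (lift ord0 j) ord0 = ord0 :> 'I_m.+2.
Proof. by apply: val_inj. Qed.

Lemma picks_map n (v : 'I_n.+1 -> FA K) :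
  picks [seq v i | i <- enum 'I_n.+1] =
  [seq (v j, [seq v (lift j i) | i <- enum 'I_n]) | j <- enum 'I_n.+1].
Proof.
elim: n v => [|n IH] v.
  by rewrite enum_ordSl enum_ord0.
rewrite enum_ordSl /= -map_comp IH -!map_comp.
congr (_ :: _); apply: eq_map => j /=.
rewrite [in RHS]enum_ordSl /= lift_lift0_0 -map_comp; congr (_, _ :: _).
by apply: eq_map => i /=; rewrite lift_lift0.
Qed.

Lemma Ssym_Sl n (v : 'I_n -> FA K) : Ssym v = Sl [seq v i | i <- enum 'I_n].
Proof.
elim: n v => [|n IH] v; first by rewrite Ssym0 enum_ord0.
rewrite Ssym_rec SlE; last by rewrite enum_ordSl.
rewrite picks_map big_map big_enum /=; apply: eq_bigr => j _; by rewrite IH.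
Qed.
End Perm.

Definition hsub (K : fieldType) (sigma : nat -> FA K) (m : fmonom nat) : FA K :=
  \prod_(i <- (m : seq nat)) sigma i.

Lemma hsub_mmorph (K : fieldType) (sigma : nat -> FA K) : mmorphism (hsub sigma).
Proof.
split; last by rewrite /hsub fm1 big_nil.
by move=> m1 m2; rewrite /hsub fmM big_cat.
Qed.

HB.instance Definition _ (K : fieldType) (sigma : nat -> FA K) :=
  isMultiplicative.Build (fmonom nat) (FA K) (hsub sigma) (hsub_mmorph sigma).

Definition phi (K : fieldType) (sigma : nat -> FA K) : FA K -> FA K :=
  mmap (@mkmalgU (fmonom nat) K (fmone nat)) (hsub sigma).

Section Phi.
Variables (K : fieldType) (sigma : nat -> FA K).

Lemma malgC_comm (c : K) (g : FA K) : GRing.comm (c%:MP) g.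
Proof.
rewrite /GRing.comm !malgM_def fgmulUg fgmulgU.
by apply: eq_bigr => m _; rewrite mulrC mul1m mulm1.
Qed.

Lemma phiM p q : phi sigma (p * q) = phi sigma p * phi sigma q.
Proof.
have := @commr_mmap_is_multiplicative _ _ _ (@mkmalgU (fmonom nat) K (fmone nat)) (hsub sigma).
case=> [g m m'|]; first exact: malgC_comm.
by move=> H _; apply: H.
Qed.

Lemma phi1 : phi sigma 1 = 1.
Proof. exact: mmap1. Qed.

Lemma phiD p q : phi sigma (p + q) = phi sigma p + phi sigma q.
Proof. exact: mmapD. Qed.

Lemma phiZ (a : K) p : phi sigma (a *: p) = a *: phi sigma p.
Proof. by rewrite /phi mmapZ mul_malgC. Qed.

Lemma phiX i : phi sigma (X K i) = sigma i.
Proof.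
rewrite /phi /X mmapU [X in X * _](_ : _ = 1) ?mul1r; last exact: mpolyC1E.
by rewrite /hsub fmU big_seq1.
Qed.

Lemma phi_k0 : (forall i, in_k0X (sigma i)) -> forall p, in_k0X p -> in_k0X (phi sigma p).
Proof.
move=> hs p hp; rewrite /in_k0X /phi mmapE raddf_sum /=.
apply: big1 => m _; rewrite mcoeffCM.
case: (eqVneq m (fmone nat)) => [->|ne]; first by rewrite hp mul0r.
rewrite /hsub rmorph_prod /=.
case: m ne => [[|i s]] ne.
  by case/eqP: ne; rewrite fmoneE.
by rewrite big_cons hs mul0r mulr0.
Qed.

Lemma phi_endo : (forall i, in_k0X (sigma i)) -> is_alg_endo (phi sigma).
Proof.
move=> hs; split.
- exact: phi_k0.
- by move=> p q _ _; apply: phiD.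
- by move=> a p _; apply: phiZ.
- by move=> p q _ _; apply: phiM.
Qed.

Lemma phi_Sx d : phi sigma (Sx K d) = Ssym (fun i : 'I_d => sigma i).
Proof.
have phi0 : phi sigma 0 = 0 by exact: mmap0.
rewrite /Sx /Ssym (big_morph (phi sigma) (phiD) phi0); apply: eq_bigr => s _.
rewrite (big_morph (phi sigma) phiM phi1).
by apply: eq_bigr => i _; rewrite phiX.
Qed.
End Phi.

Theorem corollary2p3 (k : fieldType) (d : nat) (hd : (0 < d)%N) :
  in_Tspace_gen (fun q => q = Sx k d) (Sx k d.+1 *+ d).
Proof.
move=> V [[Hk0 HV0 HVD HVZ] HVT] HS.
have S0 : V (Sx k d) by apply: HS.
pose P := fun x : FA k => x@_(fmone nat) == 0.
have key : forall w : seq (FA k), size w = d -> all P w -> V (Sl w).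
  move=> w hw hall.
  pose sigma i := nth 0 w i.
  have hs : forall i, in_k0X (sigma i).
    move=> i; rewrite /sigma /in_k0X; case: (ltnP i (size w)) => hi.
      by apply/eqP; exact: (all_nthP 0 hall).
    by rewrite nth_default // mcoeff0.
  have := HVT _ (phi_endo hs) _ S0; rewrite phi_Sx Ssym_Sl.
  suff -> : [seq sigma (nat_of_ord i) | i <- enum 'I_d] = w by [].
  have -> : [seq sigma (nat_of_ord i) | i <- enum 'I_d] = [seq nth 0 w i | i <- [seq val i | i <- enum 'I_d]].
    by rewrite -map_comp.
  by rewrite val_enum_ord -hw -/(mkseq _ _) mkseq_nth.
pose l := [seq X k (nat_of_ord i) | i <- enum 'I_d.+1].
have hl : size l = d.+1 by rewrite size_map size_enum_ord.
have Pl0 : all P l.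
  apply/allP => x /mapP [i _ ->]; rewrite /P /X mcoeffU1.
  by rewrite fmuE fmoneE.
have -> : Sx k d.+1 *+ d = Pl l by rewrite Pl_eq hl /Sx Ssym_Sl.
rewrite /Pl big_seq; apply: (big_ind V) => // p pin.
have /andP [Pp1 Pp2] := picks_all Pl0 pin.
rewrite big_seq; apply: (big_ind V) => // q qin.
have /andP [Pq1 Pq2] := picks_all Pp2 qin.
apply: key.
  rewrite /= (size_picks qin) (size_picks pin) hl.
  by case: (d) hd.  
rewrite /= Pq2 andbT /P rmorphM /=.
by rewrite (eqP Pp1) mul0r.
Qed.
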